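(* Every $\Pi$-graph contains the Farey graph as a tight minor, i.e. as a minor all of whose branch sets are finite.
   Context: Graphs are simple and may be infinite. The Farey graph is the graph with vertex set $\mathbb{Q}\cup\{\infty\}$ in which two rationals $a/b$ and $c/d$ written in lowest terms (allowing $\infty=(\pm1)/0$) are adjacent if and only if $ad-bc=\pm1$. A graph is infinitely edge-connected if it has at least two vertices and $G-E'$ is connected for every finite set $E'$ of edges. Paths are independent if they are internally vertex-disjoint. A $\Pi$-graph is an infinitely edge-connected graph that does not contain infinitely many independent paths between any two of its vertices. A graph $H$ is a minor of $G$ if there are pairwise disjoint non-empty vertex sets $V_h\subseteq V(G)$ ($h\in V(H)$), each inducing a connected subgraph of $G$ (the branch sets), such that for every edge $hh'$ of $H$ there is an edge of $G$ between $V_h$ and $V_{h'}$. A tight minor is a minor in which all branch sets are finite. *)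

(* Defs.v *)
From mathcomp Require Import all_boot all_algebra.
From Stdlib Require List.
From Stdlib Require Import Relation_Operators.
Set Implicit Arguments. Unset Strict Implicit. Unset Printing Implicit Defensive.
Import GRing.Theory Num.Theory.

Definition simple_graph (V : Type) (adj : V -> V -> Prop) : Prop :=
  (forall x y, adj x y -> adj y x) /\ (forall x, ~ adj x x).

(* ---------- Farey graph on Q ∪ {∞} = option rat (None = ∞ = 1/0) ---------- *)
Definition farey_num (q : option rat) : int :=
  match q with Some r => numq r | None => 1%R end.
Definition farey_den (q : option rat) : int :=
  match q with Some r => denq r | None => 0%R end.
Definition farey_adj (p q : option rat) : Prop :=
  let d := (farey_num p * farey_den q - farey_den p * farey_num q)%R in
  d = 1%R \/ d = (-1)%R.

Definition del_edges (V : Type) (adj : V -> V -> Prop) (E : list (V * V))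
  (x y : V) : Prop :=
  adj x y /\ ~ (List.In (x, y) E \/ List.In (y, x) E).

Definition connected (V : Type) (r : V -> V -> Prop) : Prop :=
  forall x y : V, clos_refl_trans V r x y.

Definition inf_edge_connected (V : Type) (adj : V -> V -> Prop) : Prop :=
  (exists x y : V, x <> y) /\
  forall E : list (V * V), connected (del_edges adj E).

Fixpoint walk (V : Type) (adj : V -> V -> Prop) (x : V) (l : list V) : Prop :=
  match l with
  | nil => True
  | y :: l' => adj x y /\ walk adj y l'
  end.

(* u :: l is a u–v path in the graph *)
Definition uv_path (V : Type) (adj : V -> V -> Prop) (u v : V) (l : list V)
  : Prop :=
  walk adj u l /\ List.last (u :: l) u = v /\ List.NoDup (u :: l).

Definition internal (V : Type) (v : V) (l : list V) (x : V) : Prop :=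
  List.In x l /\ x <> v.

Definition inf_indep_paths (V : Type) (adj : V -> V -> Prop) (u v : V) : Prop :=
  exists P : nat -> list V,
    (forall i j, P i = P j -> i = j) /\
    (forall i, uv_path adj u v (P i)) /\
    (forall i j x, i <> j -> internal v (P i) x -> internal v (P j) x -> False).

Definition Pi_graph (V : Type) (adj : V -> V -> Prop) : Prop :=
  inf_edge_connected adj /\ forall u v : V, ~ inf_indep_paths adj u v.

Definition is_minor (H V : Type) (hadj : H -> H -> Prop) (adj : V -> V -> Prop)
  (B : H -> V -> Prop) : Prop :=
  (forall h, exists x, B h x) /\
  (forall h h' x, h <> h' -> B h x -> B h' x -> False) /\
  (forall h x y, B h x -> B h y ->
     clos_refl_trans V (fun a b => adj a b /\ B h a /\ B h b) x y) /\
  (forall h h', hadj h h' -> exists x y, B h x /\ B h' y /\ adj x y).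

Definition tight_minor (H V : Type) (hadj : H -> H -> Prop)
  (adj : V -> V -> Prop) : Prop :=
  exists B : H -> V -> Prop,
    is_minor hadj adj B /\
    forall h, exists l : list V, forall x, B h x -> List.In x l.

(* Main.v *)
Require Import Defs.
From Stdlib Require Import ZArith Lia List.

Lemma endpoint_Z a b c d r s : (0 <= a -> 0 <= b -> 0 <= c -> 0 <= d -> 0 <= r -> 0 <= s ->
  b*c = a*d+1 -> (a+c)*s = (b+d)*r + 1 -> r + s < a+b+c+d -> r = a /\ s = b)%Z.
Proof.
  intros Ha Hb Hc Hd Hr Hs Hdet H Hlt.
  assert (Hpb : ((a+c)*b - (b+d)*a = 1)%Z) by lia.
  assert (E1 : ((a+c)*(s-b) = (b+d)*(r-a))%Z) by lia.
  set (k := (b*(r-a) - a*(s-b))%Z).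
  assert (E2 : ((a+c)*k = r - a)%Z).
  { unfold k. replace ((a+c)*(b*(r-a) - a*(s-b)))%Z with ((a+c)*b*(r-a) - a*((a+c)*(s-b)))%Z by ring.
    rewrite E1. replace ((a+c)*b*(r-a) - a*((b+d)*(r-a)))%Z with ((r-a)*((a+c)*b - (b+d)*a))%Z by ring.
    rewrite Hpb. ring. }
  assert (Hc1 : (1 <= c)%Z).
  { destruct (Z.eq_dec c 0) as [E|E]. subst c. lia. lia. }
  assert (Hp : (0 < a + c)%Z) by lia.
  assert (E3 : (s - b = (b+d)*k)%Z).
  { apply (Z.mul_reg_l _ _ (a+c)). lia. rewrite E1. rewrite <- E2. ring. }
  destruct (Z.lt_total k 0) as [Hk|[Hk|Hk]].
  - exfalso. assert (Hk' : (k <= -1)%Z) by lia.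
    assert (X1 : ((a+c)*k <= -(a+c))%Z) by (apply Z.le_trans with ((a+c)*(-1))%Z; [apply Z.mul_le_mono_nonneg_l|]; lia).
    lia.
  - rewrite Hk in E2, E3. lia.
  - exfalso. assert (Hk' : (1 <= k)%Z) by lia.
    assert (X1 : ((a+c)*k >= (a+c))%Z) by (assert (X0 : ((a+c)*1 <= (a+c)*k)%Z) by (apply Z.mul_le_mono_nonneg_l; lia); lia).
    assert (X2 : ((b+d)*k >= (b+d))%Z) by (assert (X0 : ((b+d)*1 <= (b+d)*k)%Z) by (apply Z.mul_le_mono_nonneg_l; lia); lia).
    lia.
Qed.

Lemma endpoint_nat a b c d r s : b*c = a*d+1 ->
  ((a+c)*s = (b+d)*r + 1 \/ (b+d)*r = (a+c)*s + 1) -> r + s < a+b+c+d ->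
  (r = a /\ s = b) \/ (r = c /\ s = d).
Proof.
  intros Hdet [H|H] Hlt.
  - left. assert (HZ := endpoint_Z (Z.of_nat a) (Z.of_nat b) (Z.of_nat c) (Z.of_nat d)
                   (Z.of_nat r) (Z.of_nat s)). lia.
  - right. assert (HZ := endpoint_Z (Z.of_nat d) (Z.of_nat c) (Z.of_nat b) (Z.of_nat a)
                   (Z.of_nat s) (Z.of_nat r)). lia.
Qed.

Definition med (x y : nat * nat) : nat * nat := (fst x + fst y, snd x + snd y).
Definition childI (b : bool) (I : (nat * nat) * (nat * nat)) :=
  if b then (fst I, med (fst I) (snd I)) else (med (fst I) (snd I), snd I).
Fixpoint endsF I (s : list bool) := match s with nil => I | b :: s' => endsF (childI b I) s' end.
Definition I0 : (nat * nat) * (nat * nat) := ((0,1),(1,0)).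
Definition Sm (b : bool) (x : nat * nat) : nat * nat :=
  if b then (fst x, fst x + snd x) else (fst x + snd x, snd x).
Definition Mp (f : nat * nat -> nat * nat) (I : (nat * nat) * (nat * nat)) := (f (fst I), f (snd I)).
Definition medE (s : list bool) := med (fst (endsF I0 s)) (snd (endsF I0 s)).

Lemma childI_Mp b c I : childI c (Mp (Sm b) I) = Mp (Sm b) (childI c I).
Proof.
  destruct I as [[a1 a2] [b1 b2]]. destruct b, c; unfold childI, Mp, Sm, med; simpl;
  f_equal; f_equal; lia.
Qed.

Lemma endsF_Mp b s I : endsF (Mp (Sm b) I) s = Mp (Sm b) (endsF I s).
Proof. revert I; induction s as [|c s IH]; intros I; simpl; auto. rewrite childI_Mp. auto. Qed.

Lemma endsF_cons b s : endsF I0 (b :: s) = Mp (Sm b) (endsF I0 s).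
Proof.
  simpl. rewrite <- endsF_Mp. f_equal. destruct b; reflexivity.
Qed.

Lemma endsF_app I s b : endsF I (app s (b :: nil)) = childI b (endsF I s).
Proof. revert I; induction s as [|c s IH]; intros I; simpl; auto. Qed.

Lemma medE_cons b s : medE (b :: s) = Sm b (medE s).
Proof.
  unfold medE. rewrite endsF_cons. destruct (endsF I0 s) as [[a1 a2] [b1 b2]].
  destruct b; unfold Mp, Sm, med; simpl; f_equal; lia.
Qed.

Lemma medE_pos s : 1 <= fst (medE s) /\ 1 <= snd (medE s).
Proof.
  induction s as [|b s IH]. simpl. lia.
  rewrite medE_cons. destruct (medE s) as [m1 m2]. destruct b; simpl in *; lia.
Qed.

Lemma medE_inj s t : medE s = medE t -> s = t.
Proof.
  revert t; induction s as [|b s IH]; intros t E; destruct t as [|c t]; auto.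
  - exfalso. rewrite medE_cons in E. pose proof (medE_pos t) as Hp.
    destruct (medE t) as [m1 m2]. unfold medE in E; simpl in E.
    destruct c; simpl in E; inversion E; simpl in Hp; lia.
  - exfalso. rewrite medE_cons in E. pose proof (medE_pos s) as Hp.
    destruct (medE s) as [m1 m2]. unfold medE in E; simpl in E.
    destruct b; simpl in E; inversion E; simpl in Hp; lia.
  - rewrite !medE_cons in E. pose proof (medE_pos s) as Hs. pose proof (medE_pos t) as Ht.
    destruct (medE s) as [m1 m2] eqn:Es. destruct (medE t) as [n1 n2] eqn:Et.
    simpl in Hs, Ht.
    assert (b = c).
    { destruct b, c; simpl in E; inversion E; auto; lia. }
    subst c. f_equal. apply IH. rewrite Et.
    destruct b; simpl in E; inversion E; f_equal; lia.
Qed.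

Lemma endsF_det s : snd (fst (endsF I0 s)) * fst (snd (endsF I0 s)) =
                    fst (fst (endsF I0 s)) * snd (snd (endsF I0 s)) + 1.
Proof.
  induction s as [|b s IH]. reflexivity.
  rewrite endsF_cons. destruct (endsF I0 s) as [[a1 a2] [b1 b2]]. simpl in IH.
  destruct b; unfold Mp, Sm; simpl; nia.
Qed.

Lemma medE_ends s : medE s = (fst (fst (endsF I0 s)) + fst (snd (endsF I0 s)),
                              snd (fst (endsF I0 s)) + snd (snd (endsF I0 s))).
Proof. reflexivity. Qed.

(* every Farey neighbour of a mediant with smaller size is an endpoint of its interval *)
Lemma endpoint_of s r q : medE s = (fst (medE s), snd (medE s)) ->
  (fst (medE s) * q = snd (medE s) * r + 1 \/ snd (medE s) * r = fst (medE s) * q + 1) ->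
  r + q < fst (medE s) + snd (medE s) ->
  (r, q) = fst (endsF I0 s) \/ (r, q) = snd (endsF I0 s).
Proof.
  intros _ H Hlt. rewrite medE_ends in H, Hlt. simpl in H, Hlt.
  pose proof (endsF_det s) as Hd.
  destruct (endsF I0 s) as [[a b] [c d]]. simpl in *.
  destruct (endpoint_nat a b c d r q) as [[-> ->]|[-> ->]]; auto. lia.
Qed.

Lemma same_size p q r s : (p * s = q * r + 1 \/ q * r = p * s + 1) -> p + q = r + s ->
  (p = 0 /\ q = 1 /\ r = 1 /\ s = 0) \/ (p = 1 /\ q = 0 /\ r = 0 /\ s = 1).
Proof.
  intros H E.
  assert (HZ : (Z.of_nat p * Z.of_nat s - Z.of_nat q * Z.of_nat r =
               (Z.of_nat p + Z.of_nat q) * (Z.of_nat p - Z.of_nat r))%Z).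
  { assert (Hs : (Z.of_nat s = Z.of_nat p + Z.of_nat q - Z.of_nat r)%Z) by lia. rewrite Hs. ring. }
  assert (Hn : ((Z.of_nat p + Z.of_nat q) * (Z.of_nat p - Z.of_nat r) = 1 \/
               (Z.of_nat p + Z.of_nat q) * (Z.of_nat p - Z.of_nat r) = -1)%Z) by lia.
  assert (Hn1 : (Z.of_nat p + Z.of_nat q = 1)%Z).
  { destruct Hn as [Hn|Hn].
    - apply Z.eq_mul_1_nonneg in Hn; lia.
    - assert (H0 : ((Z.of_nat p + Z.of_nat q) * (Z.of_nat r - Z.of_nat p) = 1)%Z) by lia.
      apply Z.eq_mul_1_nonneg in H0; lia. }
  lia.
Qed.

From Stdlib Require Import Classical ClassicalEpsilon List Relation_Operators Operators_Properties Lia.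

Section Graph.
Variable V : Type.
Variable adj : V -> V -> Prop.
Hypothesis adj_sym : forall x y, adj x y -> adj y x.
Hypothesis adj_irr : forall x, ~ adj x x.
Hypothesis Hiec : forall E : list (V * V), connected (del_edges adj E).
Hypothesis Hpi : forall u v : V, ~ inf_indep_paths adj u v.

Definition crt := clos_refl_trans V.
Definition radj (R : V -> Prop) (a b : V) : Prop := adj a b /\ R a /\ R b.
Definition inL (L : list V) : V -> Prop := fun x => In x L.
Definition covers (P Q : V -> Prop) (L : list V) : Prop :=
  forall u v, P u -> Q v -> adj u v -> In u L /\ In v L.
Definition finE (P Q : V -> Prop) : Prop := exists L, covers P Q L.
Definition infE (P Q : V -> Prop) : Prop := ~ finE P Q.
Definition is_comp (X R : V -> Prop) : Prop :=
  (exists r, R r) /\ (forall x, R x -> ~ X x) /\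
  (forall x y, R x -> R y -> crt (radj R) x y) /\
  (forall x y, R x -> adj x y -> R y \/ X y).
Definition reach (X : V -> Prop) (v : V) : V -> Prop :=
  fun y => crt (fun a b => adj a b /\ ~ X a /\ ~ X b) v y.
Definition conn_in (L : list V) : Prop :=
  forall x y, In x L -> In y L -> crt (radj (inL L)) x y.

Lemma crt_sym (R : V -> V -> Prop) : (forall a b, R a b -> R b a) ->
  forall x y, crt R x y -> crt R y x.
Proof.
  intros HR x y H; induction H.
  - apply rt_step; auto.
  - apply rt_refl.
  - eapply rt_trans; eauto.
Qed.

Lemma crt_mono (R R' : V -> V -> Prop) : (forall a b, R a b -> R' a b) ->
  forall x y, crt R x y -> crt R' x y.
Proof.
  intros HR x y H; induction H.
  - apply rt_step; auto.
  - apply rt_refl.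
  - eapply rt_trans; eauto.
Qed.

Lemma radj_sym R : forall a b, radj R a b -> radj R b a.
Proof. unfold radj; intros a b (H1 & H2 & H3); auto. Qed.

Lemma covers_mono P Q P' Q' L L' : covers P Q L ->
  (forall x, P' x -> P x) -> (forall x, Q' x -> Q x) -> (forall x, In x L -> In x L') ->
  covers P' Q' L'.
Proof. intros H HP HQ HL u v Hu Hv Ha. destruct (H u v); auto. Qed.

Lemma finE_mono P Q P' Q' : finE P Q ->
  (forall x, P' x -> P x) -> (forall x, Q' x -> Q x) -> finE P' Q'.
Proof. intros [L H] HP HQ. exists L. eapply covers_mono; eauto. Qed.

Lemma infE_mono P Q P' Q' : infE P' Q' ->
  (forall x, P' x -> P x) -> (forall x, Q' x -> Q x) -> infE P Q.
Proof. intros H HP HQ H'. apply H. eapply finE_mono; eauto. Qed.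

Lemma finE_union P Q1 Q2 : finE P Q1 -> finE P Q2 -> finE P (fun x => Q1 x \/ Q2 x).
Proof.
  intros [L1 H1] [L2 H2]. exists (app L1 L2). intros u v Hu [Hv|Hv] Ha.
  - destruct (H1 u v); auto. split; apply in_or_app; auto.
  - destruct (H2 u v); auto. split; apply in_or_app; auto.
Qed.

Lemma finE_split P Q Q1 Q2 : finE P Q1 -> finE P Q2 ->
  (forall x, Q x -> Q1 x \/ Q2 x) -> finE P Q.
Proof. intros H1 H2 H. eapply finE_mono. apply (finE_union _ _ _ H1 H2). auto. auto. Qed.

Lemma finE_noadj P Q : (forall u v, P u -> Q v -> adj u v -> False) -> finE P Q.
Proof. intros H. exists nil. intros u v Hu Hv Ha. exfalso; eauto. Qed.

Lemma fin_choice {A : Type} (P : A -> list V -> Prop) (l : list A) :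
  (forall a L L', P a L -> (forall x, In x L -> In x L') -> P a L') ->
  (forall a, In a l -> exists L, P a L) ->
  exists L, forall a, In a l -> P a L.
Proof.
  intros Hm Hex. induction l as [|a l IH].
  - exists nil. intros a [].
  - destruct (Hex a (or_introl eq_refl)) as [L1 H1].
    destruct IH as [L2 H2]. { intros b Hb. apply Hex. right; auto. }
    exists (app L1 L2). intros b [<-|Hb].
    + eapply Hm; eauto. intros; apply in_or_app; auto.
    + eapply Hm; eauto. intros; apply in_or_app; auto.
Qed.

Lemma reach_notX X v y : ~ X v -> reach X v y -> ~ X y.
Proof.
  intros Hv H. unfold reach in H.
  apply clos_rt_rtn1 in H. induction H; auto. tauto.
Qed.

Lemma reach_comp X v : ~ X v -> is_comp X (reach X v).
Proof.
  intros Hv. assert (Hr : forall y, reach X v y -> crt (radj (reach X v)) v y).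
  { intros y H. unfold reach in H. pose proof H as H0.
    apply clos_rt_rtn1 in H. induction H.
    - apply rt_refl.
    - eapply rt_trans. apply IHclos_refl_trans_n1. apply clos_rtn1_rt; auto.
      apply rt_step. destruct H as (Ha & Hy & Hz). split; [auto|split].
      apply clos_rtn1_rt; auto. exact H0. }
  split; [|split; [|split]].
  - exists v. apply rt_refl.
  - intros x H. eapply reach_notX; eauto.
  - intros x y Hx Hy. eapply rt_trans. apply crt_sym. apply radj_sym. apply Hr; auto.
    apply Hr; auto.
  - intros x y Hx Ha. destruct (classic (X y)) as [H|H]; [right; auto|left].
    unfold reach. eapply rt_trans. exact Hx. apply rt_step. split; auto.
    split; auto. apply (reach_notX X v x Hv Hx).
Qed.

Lemma comp_sub X X' R Q v : is_comp X' R -> (forall z, X z -> X' z) -> is_comp X Q ->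
  R v -> Q v -> forall x, R x -> Q x.
Proof.
  intros HR HX HQ Hv HQv x Hx.
  destruct HR as (_ & HR1 & HR2 & _). destruct HQ as (_ & _ & _ & HQ3).
  specialize (HR2 v x Hv Hx). apply clos_rt_rtn1 in HR2. induction HR2; auto.
  destruct H as (Ha & Hy & Hz). destruct (HQ3 y z) as [H|H]; auto.
  exfalso. apply (HR1 z Hz). auto.
Qed.

Lemma comp_eq X R R' r : is_comp X R -> is_comp X R' -> R r -> R' r ->
  forall x, R x -> R' x.
Proof. intros H H' Hr Hr'. eapply comp_sub; eauto. Qed.

Lemma comp_mono X Y R : is_comp X R -> (forall y, Y y -> ~ R y) ->
  is_comp (fun z => X z \/ Y z) R.
Proof.
  intros (H0 & H1 & H2 & H3) HY. split; [auto|split; [|split]]; auto.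
  - intros x Hx [H|H]. eapply H1; eauto. eapply HY; eauto.
  - intros x y Hx Ha. destruct (H3 x y) as [H|H]; auto.
Qed.

Lemma comp_ext X X' R : is_comp X R -> (forall z, X z <-> X' z) -> is_comp X' R.
Proof.
  intros (H0 & H1 & H2 & H3) HX. split; [auto|split; [|split]]; auto.
  - intros x Hx H. apply (H1 x Hx). apply HX; auto.
  - intros x y Hx Ha. destruct (H3 x y) as [H|H]; auto. right; apply HX; auto.
Qed.

Lemma cut_lemma (S : V -> Prop) s t : S s -> ~ S t -> finE S (fun v => ~ S v) -> False.
Proof.
  intros Hs Ht [L HL].
  pose proof (Hiec (list_prod L L) s t) as H.
  assert (Hk : forall x y, clos_refl_trans V (del_edges adj (list_prod L L)) x y -> S x -> S y).
  { intros x y Hxy. induction Hxy; auto.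
    intros Hx. destruct (classic (S y)) as [Hy|Hy]; auto. exfalso.
    destruct H0 as [Ha Hn]. destruct (HL x y Hx Hy Ha) as [H1 H2].
    apply Hn. left. apply in_prod; auto. }
  apply Ht. eapply Hk; eauto.
Qed.

Lemma comp_infE X R t : is_comp X R -> ~ R t -> infE R X.
Proof.
  intros HR Ht [L HL]. destruct HR as ([r Hr] & H1 & H2 & H3).
  apply (cut_lemma R r t Hr Ht). exists L. intros u v Hu Hv Ha.
  destruct (H3 u v Hu Ha) as [H|H]. contradiction. apply HL; auto.
Qed.


Fixpoint wk (l : list V) : Prop :=
  match l with
  | x :: ((y :: _) as l') => adj x y /\ wk l'
  | _ => True
  end.

Lemma walk_wk u l : walk adj u l <-> wk (u :: l).
Proof.
  revert u; induction l as [|a l IH]; intros u; simpl.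
  - tauto.
  - rewrite IH. destruct l; simpl; tauto.
Qed.

Lemma in_dec_classic (x : V) l : {In x l} + {~ In x l}.
Proof.
  destruct (excluded_middle_informative (In x l)); auto.
Qed.

Lemma wk_tail a l : wk (a :: l) -> wk l.
Proof. destruct l; simpl; tauto. Qed.

Lemma wk_suffix l1 l2 : wk (app l1 l2) -> wk l2.
Proof. induction l1 as [|a l1 IH]; simpl; auto. intros H. apply IH. eapply wk_tail. exact H. Qed.

Lemma last_cons2 (a b : V) l d : last (a :: b :: l) d = last (b :: l) d.
Proof. reflexivity. Qed.

Lemma last_default (a : V) l d d' : last (a :: l) d = last (a :: l) d'.
Proof. revert a; induction l as [|b l IH]; intros a; [reflexivity|].
  rewrite (last_cons2 a b l d), (last_cons2 a b l d'). apply IH. Qed.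

Lemma last_app_cons l1 (x : V) l2 d : last (app l1 (x :: l2)) d = last (x :: l2) d.
Proof.
  induction l1 as [|a l1 IH]; [reflexivity|].
  change (app (a::l1) (x::l2)) with (a :: app l1 (x::l2)).
  destruct (app l1 (x :: l2)) eqn:E.
  - destruct l1; discriminate.
  - rewrite last_cons2. exact IH.
Qed.

Lemma last_in (a : V) l d : In (last (a :: l) d) (a :: l).
Proof. revert a; induction l as [|b l IH]; intros a. left; auto.
  rewrite last_cons2. right. apply IH. Qed.

Lemma wk_snoc x p y : wk (x :: p) -> adj (last (x :: p) x) y -> wk (app (x :: p) (y :: nil)).
Proof.
  revert x; induction p as [|a p IH]; intros x H Hl.
  - simpl in *. auto.
  - change (wk (x :: a :: app p (y::nil))). destruct H as [H1 H2].
    split; auto. apply (IH a H2).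
    rewrite last_cons2 in Hl. rewrite (last_default a p a x). exact Hl.
Qed.

Lemma last_snoc (l : list V) y d : last (app l (y :: nil)) d = y.
Proof. induction l as [|a l IH]; [reflexivity|].
  change (app (a::l) (y::nil)) with (a :: app l (y::nil)).
  destruct (app l (y :: nil)) eqn:E.
  - destruct l; discriminate.
  - rewrite last_cons2. exact IH.
Qed.

Lemma path_of_crt R x y : crt (radj R) x y -> R x ->
  exists p, wk (x :: p) /\ last (x :: p) x = y /\ NoDup (x :: p) /\
            (forall z, In z (x :: p) -> R z).
Proof.
  intros H. apply clos_rt_rt1n in H. induction H as [x|x y z Hxy Hyz IH]; intros Hx.
  - exists nil. simpl. split; auto. split; auto. split. constructor; auto. constructor.
    intros z [<-|[]]; auto.
  - destruct Hxy as (Ha & _ & Hy). destruct (IH Hy) as (p & H1 & H2 & H3 & H4).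
    destruct (in_dec_classic x (y :: p)) as [Hin|Hin].
    + destruct (in_split _ _ Hin) as (l1 & l2 & E).
      exists l2. rewrite E in H1, H2, H3, H4. split; [|split; [|split]].
      * eapply wk_suffix; eauto.
      * rewrite (last_default x l2 x y). rewrite <- (last_app_cons l1). auto.
      * eapply NoDup_app_remove_l; eauto.
      * intros w Hw. apply H4. apply in_or_app; auto.
    + exists (y :: p). split; [|split; [|split]].
      * simpl. split; auto.
      * rewrite last_cons2. rewrite (last_default y p y x) in H2. auto.
      * constructor; auto.
      * intros w [<-|Hw]; auto.
Qed.


(* ---------- the only use of the Pi property: finite separators ---------- *)
Definition sepL (u v : V) (L : list V) : Prop :=
  forall l, uv_path adj u v l -> (exists z, internal v l z) ->
    exists z, internal v l z /\ In z L.

Lemma sepL_mono u v L L' : sepL u v L -> (forall x, In x L -> In x L') -> sepL u v L'.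
Proof. intros H HL l H1 H2. destruct (H l H1 H2) as (z & Hz & Hz'). eauto. Qed.

Fixpoint hist (f : list V -> list V) (n : nat) : list (list V) :=
  match n with
  | O => nil
  | S n => app (hist f n) (f (concat (hist f n)) :: nil)
  end.

Lemma hist_in f i j : i < j -> In (f (concat (hist f i))) (hist f j).
Proof.
  induction j as [|j IH]; intros H. lia.
  simpl. apply in_or_app. destruct (PeanoNat.Nat.eq_dec i j) as [->|Hne].
  - right; left; auto.
  - left. apply IH. lia.
Qed.

Lemma sep_exists u v : exists L, sepL u v L.
Proof.
  apply NNPP. intros Hn.
  assert (H : forall L, exists l, uv_path adj u v l /\ (exists z, internal v l z) /\
                         forall z, internal v l z -> ~ In z L).
  { intros L. apply NNPP. intros H. apply Hn. exists L. intros l H1 H2.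
    apply NNPP. intros H3. apply H. exists l. split; auto. split; auto.
    intros z Hz Hz'. apply H3. eauto. }
  set (f := fun L => proj1_sig (constructive_indefinite_description _ (H L))).
  assert (Hf : forall L, uv_path adj u v (f L) /\ (exists z, internal v (f L) z) /\
                         forall z, internal v (f L) z -> ~ In z L).
  { intros L. unfold f. destruct (constructive_indefinite_description _ (H L)); auto. }
  apply (Hpi u v). exists (fun n => f (concat (hist f n))).
  assert (Hkey : forall i j z, i < j -> internal v (f (concat (hist f i))) z ->
                   internal v (f (concat (hist f j))) z -> False).
  { intros i j z Hij Hi Hj. destruct (Hf (concat (hist f j))) as (_ & _ & H3).
    apply (H3 z Hj). apply in_concat. exists (f (concat (hist f i))). split.
    apply hist_in; auto. destruct Hi; auto. }
  split; [|split].
  - intros i j E. destruct (PeanoNat.Nat.lt_total i j) as [Hl|[Hl|Hl]]; auto; exfalso.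
    + destruct (Hf (concat (hist f i))) as (_ & [z Hz] & _).
      apply (Hkey i j z Hl Hz). rewrite <- E. auto.
    + destruct (Hf (concat (hist f j))) as (_ & [z Hz] & _).
      apply (Hkey j i z Hl Hz). rewrite E. auto.
  - intros i. apply Hf.
  - intros i j x Hne Hi Hj. destruct (PeanoNat.Nat.lt_total i j) as [Hl|[Hl|Hl]].
    + eauto.
    + contradiction.
    + eauto.
Qed.

Lemma sep_comp K R x y r1 r2 L : x <> y -> K x -> K y -> is_comp K R ->
  R r1 -> adj r1 x -> R r2 -> adj r2 y -> sepL x y L -> exists z, In z L /\ R z.
Proof.
  intros Hxy Kx Ky HR H1 A1 H2 A2 HL.
  destruct HR as (_ & HR1 & HR2 & _).
  destruct (path_of_crt R r1 r2 (HR2 r1 r2 H1 H2) H1) as (p & P1 & P2 & P3 & P4).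
  set (l := app (r1 :: p) (y :: nil)).
  assert (Hu : uv_path adj x y l).
  { split; [|split].
    - apply walk_wk. change (wk (x :: l)). unfold l. simpl app.
      change (adj x r1 /\ wk (app (r1 :: p) (y :: nil))). split; auto.
      apply wk_snoc; auto. rewrite P2; auto.
    - unfold l. change (last (x :: app (r1 :: p) (y :: nil)) x = y).
      exact (last_snoc (x :: r1 :: p) y x).
    - constructor.
      + intros Hin. unfold l in Hin. apply in_app_or in Hin. destruct Hin as [Hin|[E|[]]].
        * apply (HR1 x (P4 x Hin)); auto.
        * auto.
      + unfold l. apply NoDup_app; auto. repeat constructor; auto.
        intros z Hz [E|[]]. subst z. apply (HR1 y (P4 y Hz)); auto. }
  destruct (HL l Hu) as (z & (Hz1 & Hz2) & Hz3).
  { exists r1. split. unfold l. left; auto. intros E. subst r1. apply (HR1 y H1); auto. }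
  exists z. split; auto. unfold l in Hz1. apply in_app_or in Hz1.
  destruct Hz1 as [Hz1|[E|[]]]; auto. congruence.
Qed.


Lemma infE_adj P Q : infE P Q -> exists u v, P u /\ Q v /\ adj u v.
Proof.
  intros H. apply NNPP. intros Hn. apply H. apply finE_noadj.
  intros u v Hu Hv Ha. apply Hn. eauto.
Qed.

Lemma rep_list K T (Lr : list V) : exists M, forall r, In r Lr -> forall R, is_comp K R -> R r ->
  finE R T -> covers R T M.
Proof.
  apply (fin_choice (fun r M => forall R, is_comp K R -> R r -> finE R T -> covers R T M)).
  - intros r L L' H HL R H1 H2 H3. eapply covers_mono; eauto.
  - intros r _. destruct (classic (exists R0, is_comp K R0 /\ R0 r /\ finE R0 T))
      as [(R0 & H1 & H2 & [L HL])|Hn].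
    + exists L. intros R HR Hr _. eapply covers_mono; eauto.
      intros x Hx. eapply (comp_eq K R R0 r); eauto.
    + exists nil. intros R HR Hr Hf. exfalso. apply Hn. eauto.
Qed.

Lemma seps_exist (X Y : list V) : exists L, forall x y, In x X -> In y Y -> sepL x y L.
Proof.
  destruct (fin_choice (fun x L => forall y, In y Y -> sepL x y L) X) as [L HL].
  - intros x L L' H HL y Hy. eapply sepL_mono; eauto.
  - intros x _. apply (fin_choice (fun y L => sepL x y L) Y).
    + intros y L L' H HL. eapply sepL_mono; eauto.
    + intros y _. apply sep_exists.
  - exists L. auto.
Qed.

Lemma lemmaD (W Q : V -> Prop) (A : list V) (q : V) :
  is_comp W Q -> (forall a, In a A -> W a) -> Q q -> infE Q (inL A) ->
  finE Q (fun w => W w /\ ~ In w A) ->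
  exists R, is_comp (fun z => W z \/ z = q) R /\ (forall v, R v -> Q v) /\
            infE R (inL A) /\ infE R (fun v => v = q).
Proof.
  intros HQ HAW Hq HinfA [Lw HLw].
  set (K := fun z => W z \/ z = q).
  apply NNPP. intros Hn.
  assert (Hcase : forall R, is_comp K R -> (forall v, R v -> Q v) ->
            finE R (inL A) \/ finE R (fun v => v = q)).
  { intros R H1 H2. apply NNPP. intros H3. apply Hn. exists R.
    split; auto. split; auto. split; intros H4; apply H3; auto. }
  pose proof HQ as (_ & HQ1 & HQ2 & HQ3).
  assert (HaW : forall a, In a A -> a <> q).
  { intros a Ha E. subst a. apply (HQ1 q Hq). auto. }
  destruct (seps_exist A (q :: nil)) as [Ls HLs].
  destruct (rep_list K (inL A) Ls) as [M1 HM1].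
  destruct (rep_list K (fun v => v = q) Ls) as [M2 HM2].
  assert (Hrep : forall R, is_comp K R -> (exists r a, R r /\ In a A /\ adj r a) ->
             (exists r, R r /\ adj r q) -> exists z, In z Ls /\ R z).
  { intros R HR (r1 & a & Hr1 & Ha & Hra) (r2 & Hr2 & Hrq).
    eapply (sep_comp K R a q r1 r2); eauto.
    - unfold K; left; auto.
    - unfold K; right; auto.
    - apply HLs; simpl; auto. }
  set (S2 := fun v => v = q \/ exists R, is_comp K R /\ (forall x, R x -> Q x) /\ R v /\
                                   infE R (fun x => x = q)).
  destruct (infE_adj _ _ HinfA) as (u0 & a0 & _ & Ha0 & _).
  apply (cut_lemma S2 q a0).
  { left; auto. }
  { intros [E|(R & HR & _ & HRa & _)].
    - apply (HaW a0 Ha0 E).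
    - destruct HR as (_ & HR1 & _). apply (HR1 a0 HRa). left. auto. }
  exists (app A (app Lw (q :: app M1 M2))).
  assert (InA : forall x, In x A -> In x (app A (app Lw (q :: app M1 M2)))).
  { intros; apply in_or_app; auto. }
  assert (InLw : forall x, In x Lw -> In x (app A (app Lw (q :: app M1 M2)))).
  { intros; apply in_or_app; right; apply in_or_app; auto. }
  assert (Inq : In q (app A (app Lw (q :: app M1 M2)))).
  { apply in_or_app; right; apply in_or_app; right; left; auto. }
  assert (InM1 : forall x, In x M1 -> In x (app A (app Lw (q :: app M1 M2)))).
  { intros; apply in_or_app; right; apply in_or_app; right; right; apply in_or_app; auto. }
  assert (InM2 : forall x, In x M2 -> In x (app A (app Lw (q :: app M1 M2)))).
  { intros; apply in_or_app; right; apply in_or_app; right; right; apply in_or_app; auto. }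
  intros u v Hu Hv Huv.
  destruct Hu as [Eu|(R & HR & HRQ & HRu & HRinf)].
  -
    subst u. assert (Hvq : v <> q). { intros E; apply Hv; left; auto. }
    destruct (classic (W v)) as [HWv|HWv].
    + destruct (in_dec_classic v A) as [HvA|HvA].
      * split; auto.
      * destruct (HLw q v Hq (conj HWv HvA) Huv). split; auto.
    + assert (HQv : Q v). { destruct (HQ3 q v Hq Huv); auto; contradiction. }
      assert (HKv : ~ K v). { unfold K; tauto. }
      set (R := reach K v). pose proof (reach_comp K v HKv) as HR.
      assert (HRv : R v). { apply rt_refl. }
      assert (HRQ : forall x, R x -> Q x).
      { apply (comp_sub W K R Q v); auto. unfold K; auto. }
      assert (HfinR : finE R (fun x => x = q)).
      { apply NNPP. intros H. apply Hv. right. exists R. auto. }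
      assert (HadjA : exists r a, R r /\ In a A /\ adj r a).
      { apply NNPP. intros H. apply (comp_infE K R q HR).
        - intros Hq'. apply (proj1 (proj2 HR) q Hq'). right; auto.
        - apply (finE_split R K (fun w => W w /\ ~ In w A)
                   (fun w => inL A w \/ w = q)).
          + exists Lw. apply (covers_mono Q _ R _ Lw Lw HLw); auto.
          + apply finE_union.
            * apply finE_noadj. intros r a Hr Ha Hra. apply H. eauto.
            * auto.
          + intros w [Hw|Hw]; [|right; right; auto].
            destruct (in_dec_classic w A); [right; left; auto| left; auto]. }
      destruct (Hrep R HR HadjA) as (z & Hz & HRz).
      { exists v. split; auto. }
      destruct (HM2 z Hz R HR HRz HfinR v q HRv eq_refl (adj_sym _ _ Huv)).
      split; auto.
  -
    destruct (classic (v = q)) as [Evq|Hvq].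
    { exfalso. apply Hv. left; auto. }
    destruct (classic (W v)) as [HWv|HWv].
    + destruct (in_dec_classic v A) as [HvA|HvA].
      * assert (Hfa : finE R (inL A)).
        { destruct (Hcase R HR HRQ) as [H|H]; auto. contradiction. }
        destruct (infE_adj _ _ HRinf) as (r2 & q' & Hr2 & Eq & Hr2q). subst q'.
        destruct (Hrep R HR) as (z & Hz & HRz).
        { exists u, v. auto. }
        { exists r2; auto. }
        destruct (HM1 z Hz R HR HRz Hfa u v HRu HvA Huv). split; auto.
      * destruct (HLw u v (HRQ u HRu) (conj HWv HvA) Huv). split; auto.
    + exfalso. apply Hv. right. exists R. split; auto. split; auto. split; auto.
      destruct HR as (_ & _ & _ & HR3). destruct (HR3 u v HRu Huv) as [H|[H|H]]; auto;
        contradiction.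
Qed.


Lemma wk_conn x p : wk (x :: p) -> forall y, In y (x :: p) -> crt (radj (inL (x :: p))) x y.
Proof.
  revert x; induction p as [|a p IH]; intros x H y Hy.
  - destruct Hy as [<-|[]]. apply rt_refl.
  - destruct H as [H1 H2]. destruct Hy as [<-|Hy]. apply rt_refl.
    apply rt_trans with a.
    + apply rt_step. split; auto. unfold inL; simpl; auto.
    + eapply crt_mono; [|apply IH; auto].
      intros u w (Hu & Hu1 & Hu2). split; auto. unfold inL in *; simpl; auto.
Qed.

Lemma conn_wk x p : wk (x :: p) -> conn_in (x :: p).
Proof.
  intros H y z Hy Hz. eapply rt_trans. apply crt_sym. apply radj_sym.
  apply wk_conn; auto. apply wk_conn; auto.
Qed.

Lemma conn_app Z1 Z2 z : conn_in Z1 -> conn_in Z2 -> In z Z1 -> In z Z2 -> conn_in (app Z1 Z2).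
Proof.
  intros H1 H2 Hz1 Hz2.
  assert (M1 : forall x y, crt (radj (inL Z1)) x y -> crt (radj (inL (app Z1 Z2))) x y).
  { apply crt_mono. intros u w (Hu & Hu1 & Hu2). split; auto. unfold inL in *.
    split; apply in_or_app; auto. }
  assert (M2 : forall x y, crt (radj (inL Z2)) x y -> crt (radj (inL (app Z1 Z2))) x y).
  { apply crt_mono. intros u w (Hu & Hu1 & Hu2). split; auto. unfold inL in *.
    split; apply in_or_app; auto. }
  assert (Hz : forall x, In x (app Z1 Z2) -> crt (radj (inL (app Z1 Z2))) x z).
  { intros x Hx. apply in_app_or in Hx. destruct Hx as [Hx|Hx]; auto. }
  intros x y Hx Hy. eapply rt_trans. apply Hz; auto. apply crt_sym. apply radj_sym. auto.
Qed.

Lemma conn_build (C : V -> Prop) c0 M : (forall x y, C x -> C y -> crt (radj C) x y) -> C c0 ->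
  exists Z, In c0 Z /\ (forall z, In z Z -> C z) /\ (forall m, In m M -> C m -> In m Z) /\
            conn_in Z.
Proof.
  intros HC Hc0. induction M as [|m M IH].
  - exists (c0 :: nil). split; [left; auto|split; [|split]].
    + intros z [<-|[]]; auto.
    + intros m [].
    + apply conn_wk. simpl; auto.
  - destruct IH as (Z & H1 & H2 & H3 & H4).
    destruct (classic (C m)) as [Hm|Hm].
    + destruct (path_of_crt C c0 m (HC c0 m Hc0 Hm) Hc0) as (p & P1 & P2 & P3 & P4).
      exists (app Z (c0 :: p)). split; [apply in_or_app; auto|split; [|split]].
      * intros z Hz. apply in_app_or in Hz. destruct Hz; auto.
      * intros m' [<-|Hm'] Hc; apply in_or_app.
        right. rewrite <- P2. apply last_in.
        left; auto.
      * apply (conn_app Z (c0 :: p) c0); auto. apply conn_wk; auto. left; auto.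
    + exists Z. split; auto. split; auto. split; auto.
      intros m' [<-|Hm'] Hc. contradiction. auto.
Qed.

Lemma conn_add Z Y : conn_in Z -> (forall y, In y Y -> exists z, In z Z /\ adj y z) ->
  conn_in (app Z Y).
Proof.
  intros HZ HY.
  assert (M1 : forall x y, crt (radj (inL Z)) x y -> crt (radj (inL (app Z Y))) x y).
  { apply crt_mono. intros u w (Hu & Hu1 & Hu2). split; auto. unfold inL in *.
    split; apply in_or_app; auto. }
  assert (Hz : forall x, In x (app Z Y) -> exists z, In z Z /\ crt (radj (inL (app Z Y))) x z).
  { intros x Hx. destruct (in_app_or _ _ _ Hx) as [Hx'|Hx'].
    - exists x. split; [exact Hx'| apply rt_refl].
    - destruct (HY x Hx') as (z & Hz & Ha). exists z. split; [exact Hz|]. apply rt_step.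
      split; [exact Ha|]. unfold inL; split; [exact Hx|apply in_or_app; auto]. }
  intros x y Hx Hy. destruct (Hz x Hx) as (zx & Hzx & Cx). destruct (Hz y Hy) as (zy & Hzy & Cy).
  eapply rt_trans. exact Cx. eapply rt_trans. apply M1. apply HZ; eauto.
  apply crt_sym. apply radj_sym. auto.
Qed.

Lemma exit_lemma (C R : V -> Prop) r z : crt (radj C) r z -> R r -> ~ R z ->
  exists u w, R u /\ ~ R w /\ C w /\ adj u w.
Proof.
  intros H. apply clos_rt_rt1n in H. induction H as [x|x y z Hxy Hyz IH]; intros Hx Hz.
  - contradiction.
  - destruct (classic (R y)) as [Hy|Hy]; auto.
    destruct Hxy as (Ha & _ & Hy'). exists x, y. auto.
Qed.


Definition Wz (W : V -> Prop) (Z : list V) : V -> Prop := fun z => W z \/ In z Z.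

Definition Inv (W : V -> Prop) (A B : list V) (C : V -> Prop) : Prop :=
  (forall x, In x A -> W x) /\ (forall x, In x B -> W x) /\ (forall x, In x A -> ~ In x B) /\
  is_comp W C /\ infE C (inL A) /\ infE C (inL B) /\
  finE C (fun w => W w /\ ~ In w A /\ ~ In w B).

Lemma substep K Q A Z0 : is_comp K Q -> (forall a, In a A -> K a) -> (forall z, In z Z0 -> K z) ->
  (forall a, In a A -> ~ In a Z0) -> infE Q (inL A) ->
  finE Q (fun w => K w /\ ~ In w A /\ ~ In w Z0) -> (exists q z, Q q /\ In z Z0 /\ adj q z) ->
  exists Y R, (forall y, In y Y -> Q y) /\ (forall y, In y Y -> exists z, In z Z0 /\ adj y z) /\
    is_comp (Wz K Y) R /\ (forall v, R v -> Q v) /\ infE R (inL A) /\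
    infE R (inL (app Z0 Y)) /\ finE R (fun w => Wz K Y w /\ ~ In w A /\ ~ In w (app Z0 Y)).
Proof.
  intros HQ HA HZ HAZ HQA HQf (q & z & Hq & Hz & Hqz).
  destruct (classic (finE Q (inL Z0))) as [Hfin|Hinf].
  - destruct (lemmaD K Q A q HQ HA Hq HQA) as (R & HR & HRQ & HRA & HRq).
    { apply (finE_split Q _ _ _ HQf Hfin). intros w [Hw1 Hw2].
      destruct (in_dec_classic w Z0); [right; auto|left; auto]. }
    exists (q :: nil), R. split; [|split; [|split; [|split; [|split; [|split]]]]].
    + intros y [<-|[]]; auto.
    + intros y [<-|[]]; eauto.
    + apply (comp_ext _ _ R HR). intros w. unfold Wz. simpl. intuition.
    + auto.
    + auto.
    + apply (infE_mono _ _ _ _ HRq); auto. intros x ->. unfold inL. apply in_or_app. right; left; auto.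
    + apply (finE_mono _ _ _ _ HQf); auto. intros w (H1 & H2 & H3). unfold Wz in H1.
      split; [|split]; auto.
      * destruct H1 as [H1|[<-|[]]]; auto. exfalso; apply H3; apply in_or_app; right; left; auto.
      * intros H; apply H3; apply in_or_app; auto.
  - exists nil, Q. split; [|split; [|split; [|split; [|split; [|split]]]]].
    + intros y [].
    + intros y [].
    + apply (comp_ext _ _ Q HQ). intros w. unfold Wz. simpl. intuition.
    + auto.
    + auto.
    + rewrite app_nil_r. auto.
    + apply (finE_mono _ _ _ _ HQf); auto. intros w (H1 & H2 & H3). unfold Wz in H1.
      rewrite app_nil_r in H3. destruct H1 as [H1|[]]. auto.
Qed.


Lemma step W A B C : Inv W A B C ->
  exists Z R1 R2, Z <> nil /\ (forall z, In z Z -> C z) /\ conn_in Z /\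
    (exists z a, In z Z /\ In a A /\ adj z a) /\ (exists z b, In z Z /\ In b B /\ adj z b) /\
    Inv (Wz W Z) A Z R1 /\ Inv (Wz W Z) Z B R2 /\
    (forall v, R1 v -> C v) /\ (forall v, R2 v -> C v) /\ (forall v, R1 v -> R2 v -> False).
Proof.
  intros (HAW & HBW & HAB & HC & HCA & HCB & HCrest).
  pose proof HC as (_ & HC1 & HC2 & HC3).
  destruct (seps_exist A B) as [Ls HLs].
  destruct (infE_adj _ _ HCA) as (ca & a0 & Hca & Ha0 & Hcaa).
  destruct (infE_adj _ _ HCB) as (cb & b0 & Hcb & Hb0 & Hcbb).
  destruct (conn_build C ca (cb :: Ls) HC2 Hca) as (Z0 & HZ0a & HZ0C & HZ0L & HZ0conn).
  set (K := Wz W Z0).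
  assert (KZ0 : forall z, In z Z0 -> K z). { intros; right; auto. }
  assert (KA : forall a, In a A -> K a). { intros; left; auto. }
  assert (KB : forall b, In b B -> K b). { intros; left; auto. }
  assert (AZ0 : forall a, In a A -> ~ In a Z0). { intros a Ha H. apply (HC1 a); auto. }
  assert (BZ0 : forall b, In b B -> ~ In b Z0). { intros b Hb H. apply (HC1 b); auto. }
  assert (Hno2 : forall R, is_comp K R -> (forall v, R v -> C v) ->
            (exists r a, R r /\ In a A /\ adj r a) -> (exists r b, R r /\ In b B /\ adj r b) -> False).
  { intros R HR HRC (r1 & a & Hr1 & Ha & Hra) (r2 & b & Hr2 & Hb & Hrb).
    destruct (sep_comp K R a b r1 r2 Ls) as (z & Hz & HRz); auto.
    - intros E; subst; apply (HAB b); auto.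
    - apply (proj1 (proj2 HR) z HRz). right. apply HZ0L. right; auto. apply HRC; auto. }
  assert (HadjZ : forall R, is_comp K R -> (forall v, R v -> C v) ->
            exists r z, R r /\ In z Z0 /\ adj r z).
  { intros R HR HRC. pose proof HR as ([r Hr] & HR1 & HR2 & HR3).
    destruct (exit_lemma C R r ca (HC2 r ca (HRC r Hr) Hca) Hr) as (u & w & Hu & Hw & HCw & Huw).
    { intros H. apply (HR1 ca H). right; auto. }
    exists u, w. split; auto. split; auto.
    destruct (HR3 u w Hu Huw) as [H|[H|H]]; auto; try contradiction.
    exfalso; apply (HC1 w); auto. }
  destruct (seps_exist A Z0) as [LsA HLsA].
  destruct (seps_exist B Z0) as [LsB HLsB].
  assert (HrepA : forall R, is_comp K R -> (forall v, R v -> C v) ->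
            (exists r a, R r /\ In a A /\ adj r a) -> exists z, In z LsA /\ R z).
  { intros R HR HRC (r1 & a & Hr1 & Ha & Hra). destruct (HadjZ R HR HRC) as (r2 & z & Hr2 & Hz & Hrz).
    apply (sep_comp K R a z r1 r2 LsA); auto. intros E; subst; apply (AZ0 z); auto. }
  assert (HrepB : forall R, is_comp K R -> (forall v, R v -> C v) ->
            (exists r b, R r /\ In b B /\ adj r b) -> exists z, In z LsB /\ R z).
  { intros R HR HRC (r1 & b & Hr1 & Hb & Hrb). destruct (HadjZ R HR HRC) as (r2 & z & Hr2 & Hz & Hrz).
    apply (sep_comp K R b z r1 r2 LsB); auto. intros E; subst; apply (BZ0 z); auto. }
  assert (HcompC : forall c, C c -> ~ In c Z0 -> is_comp K (reach K c) /\ (forall v, reach K c v -> C v)).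
  { intros c Hc Hnz. assert (HKc : ~ K c). { intros [H|H]. apply (HC1 c); auto. auto. }
    split. apply reach_comp; auto. apply (comp_sub W K (reach K c) C c); auto.
    apply reach_comp; auto. intros; left; auto. apply rt_refl. }
  assert (HQ1 : exists Q1, is_comp K Q1 /\ (forall v, Q1 v -> C v) /\ infE Q1 (inL A)).
  { apply NNPP. intros Hn. destruct (rep_list K (inL A) LsA) as [M HM].
    apply HCA. exists (app Z0 (app A M)). intros c a Hc Ha Hca'.
    destruct (in_dec_classic c Z0) as [Hz|Hz].
    - split; apply in_or_app; [left|right; apply in_or_app; left]; auto.
    - destruct (HcompC c Hc Hz) as [HR HRC].
      destruct (HrepA _ HR HRC) as (z & Hz1 & Hz2). { exists c, a. split; auto. apply rt_refl. }
      assert (Hf : finE (reach K c) (inL A)).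
      { apply NNPP. intros H. apply Hn. exists (reach K c). auto. }
      destruct (HM z Hz1 _ HR Hz2 Hf c a (rt_refl _ _ _) Ha Hca').
      split; apply in_or_app; right; apply in_or_app; right; auto. }
  assert (HQ2 : exists Q2, is_comp K Q2 /\ (forall v, Q2 v -> C v) /\ infE Q2 (inL B)).
  { apply NNPP. intros Hn. destruct (rep_list K (inL B) LsB) as [M HM].
    apply HCB. exists (app Z0 (app B M)). intros c b Hc Hb Hcb'.
    destruct (in_dec_classic c Z0) as [Hz|Hz].
    - split; apply in_or_app; [left|right; apply in_or_app; left]; auto.
    - destruct (HcompC c Hc Hz) as [HR HRC].
      destruct (HrepB _ HR HRC) as (z & Hz1 & Hz2). { exists c, b. split; auto. apply rt_refl. }
      assert (Hf : finE (reach K c) (inL B)).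
      { apply NNPP. intros H. apply Hn. exists (reach K c). auto. }
      destruct (HM z Hz1 _ HR Hz2 Hf c b (rt_refl _ _ _) Hb Hcb').
      split; apply in_or_app; right; apply in_or_app; right; auto. }
  destruct HQ1 as (Q1 & HQ1 & HQ1C & HQ1A).
  destruct HQ2 as (Q2 & HQ2 & HQ2C & HQ2B).
  assert (Q1nB : forall r b, Q1 r -> In b B -> adj r b -> False).
  { intros r b Hr Hb Hrb. apply (Hno2 Q1 HQ1 HQ1C).
    destruct (infE_adj _ _ HQ1A) as (u & a & Hu & Ha & Hua). exists u, a; auto.
    exists r, b; auto. }
  assert (Q2nA : forall r a, Q2 r -> In a A -> adj r a -> False).
  { intros r a Hr Ha Hra. apply (Hno2 Q2 HQ2 HQ2C).
    exists r, a; auto.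
    destruct (infE_adj _ _ HQ2B) as (u & b & Hu & Hb & Hub). exists u, b; auto. }
  assert (Hdisj : forall v, Q1 v -> Q2 v -> False).
  { intros v H1 H2. destruct (infE_adj _ _ HQ2B) as (u & b & Hu & Hb & Hub).
    apply (Q1nB u b); auto. apply (comp_eq K Q2 Q1 v); auto. }
  destruct (substep K Q1 A Z0 HQ1 KA KZ0 AZ0 HQ1A) as (Y1 & R1 & HY1Q & HY1a & HR1 & HR1Q & HR1A & HR1Z & HR1f).
  { apply (finE_split Q1 _ (fun w => W w /\ ~ In w A /\ ~ In w B) (inL B)).
    - apply (finE_mono _ _ _ _ HCrest); auto.
    - apply finE_noadj. intros r b Hr Hb Hrb. apply (Q1nB r b); auto.
    - intros w (H1 & H2 & H3). destruct H1 as [H1|H1]; [|contradiction].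
      destruct (in_dec_classic w B); [right; auto|left; auto]. }
  { apply HadjZ; auto. }
  set (K2 := Wz K Y1).
  assert (HQ2' : is_comp K2 Q2).
  { apply comp_mono; auto. intros y Hy H. apply (Hdisj y); auto. }
  destruct (substep K2 Q2 B (app Z0 Y1) HQ2') as (Y2 & R2 & HY2Q & HY2a & HR2 & HR2Q & HR2B & HR2Z & HR2f).
  { intros b Hb; left; left; auto. }
  { intros z Hz. apply in_app_or in Hz. destruct Hz; [left; right; auto|right; auto]. }
  { intros b Hb Hz. apply in_app_or in Hz. destruct Hz as [Hz|Hz].
    apply (BZ0 b); auto. apply (HC1 b); auto. }
  { auto. }
  { apply (finE_split Q2 _ (fun w => W w /\ ~ In w A /\ ~ In w B) (inL A)).
    - apply (finE_mono _ _ _ _ HCrest); auto.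
    - apply finE_noadj. intros r a Hr Ha Hra. apply (Q2nA r a); auto.
    - intros w (H1 & H2 & H3). destruct H1 as [[H1|H1]|H1];
        try (exfalso; apply H3; apply in_or_app; auto; fail).
      destruct (in_dec_classic w A); [right; auto|left; auto]. }
  { destruct (HadjZ Q2 HQ2 HQ2C) as (r & z & Hr & Hz & Hrz). exists r, z.
    split; auto. split; auto. apply in_or_app; auto. }
  set (Z := app (app Z0 Y1) Y2).
  assert (HZC : forall z, In z Z -> C z).
  { intros z Hz. unfold Z in Hz. rewrite !in_app_iff in Hz. destruct Hz as [[H|H]|H]; auto. }
  assert (HWZ : forall z, Wz W Z z <-> (Wz (Wz K Y1) Y2 z)).
  { intros z. unfold K, Z, Wz. rewrite !in_app_iff. tauto. }
  assert (HWZ2 : forall z, Wz W Z z <-> (Wz K2 Y2 z)).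
  { intros z. unfold K2, K, Z, Wz. rewrite !in_app_iff. tauto. }
  assert (AZ : forall a, In a A -> ~ In a Z). { intros a Ha H. apply (HC1 a); auto. }
  assert (BZ : forall b, In b B -> ~ In b Z). { intros b Hb H. apply (HC1 b); auto. }
  exists Z, R1, R2. split; [|split; [|split; [|split; [|split; [|split; [|split; [|split; [|split]]]]]]]].
  - unfold Z. destruct Z0. contradiction. discriminate.
  - auto.
  - unfold Z. apply conn_add. apply conn_add; auto.
    intros y Hy. destruct (HY2a y Hy) as (z & Hz & Hyz). eauto.
  - exists ca, a0. split; auto. unfold Z; rewrite !in_app_iff; auto.
  - exists cb, b0. split; auto. unfold Z; rewrite !in_app_iff. left; left. apply HZ0L. left; auto. auto.
  - split; [|split; [|split; [|split; [|split; [|split]]]]].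
    + intros x Hx; left; auto.
    + intros x Hx; right; auto.
    + auto.
    + assert (H : is_comp (fun z => Wz K Y1 z \/ inL Y2 z) R1).
      { apply comp_mono; auto. intros y Hy H. apply (Hdisj y); auto. }
      apply (comp_ext _ _ R1 H). intros z. rewrite HWZ. unfold inL, Wz. tauto.
    + auto.
    + apply (infE_mono _ _ _ _ HR1Z); auto. intros x. unfold inL, Z. rewrite !in_app_iff. tauto.
    + apply (finE_mono _ _ _ _ HR1f); auto. intros w (H1 & H2 & H3).
      unfold Z in H3. rewrite !in_app_iff in H3. split; [|split]; auto.
      * apply HWZ in H1. destruct H1 as [H1|H1]; auto. tauto.
      * rewrite in_app_iff. tauto.
  - split; [|split; [|split; [|split; [|split; [|split]]]]].
    + intros x Hx; right; auto.
    + intros x Hx; left; auto.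
    + intros x Hx H. apply (BZ x); auto.
    + apply (comp_ext _ _ R2 HR2). intros z. rewrite HWZ2. tauto.
    + apply (infE_mono _ _ _ _ HR2Z); auto. intros x. unfold inL, Z. auto.
    + auto.
    + apply (finE_mono _ _ _ _ HR2f); auto. intros w (H1 & H2 & H3).
      split; [|split]; auto.
      * apply HWZ2; auto.
  - intros v Hv. apply HQ1C. auto.
  - intros v Hv. apply HQ2C. auto.
  - intros v H1 H2. apply (Hdisj v); auto.
Qed.


Lemma crt_edge (R : V -> V -> Prop) u v : crt R u v -> u <> v -> exists a b, R a b.
Proof.
  intros H. induction H as [a b Hab|a|a b c H1 IH1 H2 IH2]; intros Hne.
  - eauto.
  - contradiction.
  - destruct (classic (a = b)) as [E|E]. subst; auto. auto.
Qed.

Lemma init_config : (exists u v : V, u <> v) ->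
  exists A0 B0 W0 Cp Cm, Inv W0 B0 A0 Cp /\ Inv W0 B0 A0 Cm /\
    (forall v, Cp v -> Cm v -> False) /\ A0 <> nil /\ B0 <> nil /\ conn_in A0 /\ conn_in B0 /\
    (exists x y, In x A0 /\ In y B0 /\ adj x y).
Proof.
  intros (u & v & Huv).
  destruct (crt_edge _ u v (Hiec nil u v) Huv) as (x & y & [Hxy _]).
  assert (Hne : y <> x). { intros E; subst; apply (adj_irr x); auto. }
  set (K := fun z : V => z = x).
  set (Q := reach K y).
  assert (HQ : is_comp K Q). { apply reach_comp. unfold K; auto. }
  assert (HQx : ~ Q x). { intros H. apply (proj1 (proj2 HQ) x H). unfold K; auto. }
  destruct (lemmaD K Q (x :: nil) y HQ) as (R & HR & HRQ & HRx & HRy).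
  { intros a [<-|[]]. unfold K; auto. }
  { apply rt_refl. }
  { apply (infE_mono _ _ _ _ (comp_infE K Q x HQ HQx)); auto.
    intros w Hw. unfold K in Hw. subst. left; auto. }
  { apply finE_noadj. intros r w Hr (Hw1 & Hw2) _. apply Hw2. unfold K in Hw1. subst; left; auto. }
  set (W1 := fun z => K z \/ z = y).
  assert (HI : Inv W1 (x :: nil) (y :: nil) R).
  { split; [|split; [|split; [|split; [|split; [|split]]]]].
    - intros a [<-|[]]. left. unfold K; auto.
    - intros a [<-|[]]. right. auto.
    - intros a [<-|[]] [E|[]]. auto.
    - auto.
    - auto.
    - apply (infE_mono _ _ _ _ HRy); auto. intros w ->. left; auto.
    - apply finE_noadj. intros r w Hr (Hw1 & Hw2 & Hw3) _. destruct Hw1 as [Hw1|Hw1].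
      apply Hw2; left; auto. apply Hw3; left; auto. }
  destruct (step _ _ _ _ HI) as (Z & R1 & R2 & HZn & HZC & HZconn & HZA & HZB & HI1 & HI2 & HR1C & HR2C & HR12).
  assert (HZxy : forall z, In z Z -> z <> x /\ z <> y).
  { intros z Hz. pose proof (proj1 (proj2 HR) z (HZC z Hz)) as H.
    split; intros E; apply H; [left|right]; auto. }
  exists (x :: y :: nil), Z, (Wz W1 Z), R1, R2.
  destruct HI1 as (I1 & I2 & I3 & I4 & I5 & I6 & I7).
  destruct HI2 as (J1 & J2 & J3 & J4 & J5 & J6 & J7).
  split; [|split; [|split; [|split; [|split; [|split; [|split]]]]]].
  - split; [|split; [|split; [|split; [|split; [|split]]]]].
    + auto.
    + intros a [<-|[<-|[]]]; left; unfold W1, K; auto.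
    + intros a Ha [E|[E|[]]]; subst; destruct (HZxy a Ha); auto.
    + auto.
    + auto.
    + apply (infE_mono _ _ _ _ I5); auto. intros w [<-|[]]. left; auto.
    + apply (finE_mono _ _ _ _ I7); auto. intros w (H1 & H2 & H3). split; auto. split; auto.
      intros [<-|[]]. apply H3; left; auto.
  - split; [|split; [|split; [|split; [|split; [|split]]]]].
    + auto.
    + intros a [<-|[<-|[]]]; left; unfold W1, K; auto.
    + intros a Ha [E|[E|[]]]; subst; destruct (HZxy a Ha); auto.
    + auto.
    + auto.
    + apply (infE_mono _ _ _ _ J6); auto. intros w [<-|[]]. right; left; auto.
    + apply (finE_mono _ _ _ _ J7); auto. intros w (H1 & H2 & H3). split; auto. split; auto.
      intros [<-|[]]. apply H3; right; left; auto.
  - auto.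
  - discriminate.
  - auto.
  - apply conn_wk. simpl. auto.
  - auto.
  - destruct HZA as (z & a & Hz & Ha & Hza). destruct Ha as [Ha|[]]. subst a.
    exists x, z. split; [left; auto|split; auto].
Qed.

Record St := mkSt { sW : V -> Prop; sL : list V; sR : list V; sC : V -> Prop }.
Record Out := mkOut { oZ : list V; oR1 : V -> Prop; oR2 : V -> Prop }.

Definition InvS (st : St) : Prop := Inv (sW st) (sL st) (sR st) (sC st).

Definition Spec (st : St) (o : Out) : Prop :=
  oZ o <> nil /\ (forall z, In z (oZ o) -> sC st z) /\ conn_in (oZ o) /\
  (exists z a, In z (oZ o) /\ In a (sL st) /\ adj z a) /\
  (exists z b, In z (oZ o) /\ In b (sR st) /\ adj z b) /\
  Inv (Wz (sW st) (oZ o)) (sL st) (oZ o) (oR1 o) /\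
  Inv (Wz (sW st) (oZ o)) (oZ o) (sR st) (oR2 o) /\
  (forall v, oR1 o v -> sC st v) /\ (forall v, oR2 o v -> sC st v) /\
  (forall v, oR1 o v -> oR2 o v -> False).

Lemma step_ex st : exists o, InvS st -> Spec st o.
Proof.
  destruct (classic (InvS st)) as [H|H].
  - destruct (step _ _ _ _ H) as (Z & R1 & R2 & HH). exists (mkOut Z R1 R2). intros _. exact HH.
  - exists (mkOut nil (fun _ => False) (fun _ => False)). intros H'. contradiction.
Qed.

Definition stepf (st : St) : Out := proj1_sig (constructive_indefinite_description _ (step_ex st)).

Lemma stepf_spec st : InvS st -> Spec st (stepf st).
Proof. unfold stepf. destruct (constructive_indefinite_description _ (step_ex st)); auto. Qed.

Definition child (b : bool) (st : St) : St :=
  let o := stepf st in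
  if b then mkSt (Wz (sW st) (oZ o)) (sL st) (oZ o) (oR1 o)
  else mkSt (Wz (sW st) (oZ o)) (oZ o) (sR st) (oR2 o).

Fixpoint nodeF (st : St) (s : list bool) : St :=
  match s with nil => st | b :: s' => nodeF (child b st) s' end.

Definition Zn (st : St) (s : list bool) : list V := oZ (stepf (nodeF st s)).

Lemma child_inv b st : InvS st -> InvS (child b st).
Proof.
  intros H. pose proof (stepf_spec st H) as (_ & _ & _ & _ & _ & H1 & H2 & _).
  destruct b; unfold InvS, child; simpl; auto.
Qed.

Lemma node_inv st s : InvS st -> InvS (nodeF st s).
Proof. revert st; induction s as [|b s IH]; intros st H; simpl; auto. apply IH, child_inv; auto. Qed.

Lemma child_sub b st v : InvS st -> sC (child b st) v -> sC st v.
Proof.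
  intros H. pose proof (stepf_spec st H) as (_ & _ & _ & _ & _ & _ & _ & H1 & H2 & _).
  destruct b; unfold child; simpl; auto.
Qed.

Lemma node_sub st s v : InvS st -> sC (nodeF st s) v -> sC st v.
Proof.
  revert st; induction s as [|b s IH]; intros st H Hv; simpl in *; auto.
  apply (child_sub b); auto. apply IH; auto. apply child_inv; auto.
Qed.

Lemma child_avoid b st v : InvS st -> sC (child b st) v -> ~ In v (oZ (stepf st)).
Proof.
  intros H Hv Hz. pose proof (child_inv b st H) as (_ & _ & _ & (_ & HC1 & _) & _).
  apply (HC1 v Hv). destruct b; unfold child; simpl; right; auto.
Qed.

Lemma child_disj st v : InvS st -> sC (child true st) v -> sC (child false st) v -> False.
Proof.
  intros H. pose proof (stepf_spec st H) as (_ & _ & _ & _ & _ & _ & _ & _ & _ & H1).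
  unfold child; simpl; eauto.
Qed.

Lemma Zn_in_C st s z : InvS st -> In z (Zn st s) -> sC (nodeF st s) z.
Proof.
  intros H Hz. pose proof (stepf_spec _ (node_inv st s H)) as (_ & H1 & _). apply H1; auto.
Qed.

Lemma Zn_disj st s t v : InvS st -> s <> t -> In v (Zn st s) -> In v (Zn st t) -> False.
Proof.
  revert st t; induction s as [|b s IH]; intros st t H Hne Hs Ht; destruct t as [|b' t].
  - auto.
  - unfold Zn in Hs, Ht. simpl in Hs, Ht.
    apply (child_avoid b' st v H); auto.
    apply (node_sub _ t); auto. apply child_inv; auto. apply Zn_in_C; auto. apply child_inv; auto.
  - unfold Zn in Hs, Ht. simpl in Hs, Ht.
    apply (child_avoid b st v H); auto.
    apply (node_sub _ s); auto. apply child_inv; auto. apply Zn_in_C; auto. apply child_inv; auto.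
  - unfold Zn in Hs, Ht. simpl in Hs, Ht.
    assert (H1 : sC (child b st) v).
    { apply (node_sub _ s); auto. apply child_inv; auto. apply Zn_in_C; auto. apply child_inv; auto. }
    assert (H2 : sC (child b' st) v).
    { apply (node_sub _ t); auto. apply child_inv; auto. apply Zn_in_C; auto. apply child_inv; auto. }
    destruct (Bool.bool_dec b b') as [<-|Hb].
    + apply (IH (child b st) t); auto. apply child_inv; auto. intros E; subst; auto.
    + destruct b, b'; try congruence.
      * apply (child_disj st v); auto.
      * apply (child_disj st v); auto.
Qed.

Lemma node_app st s b : nodeF st (app s (b :: nil)) = child b (nodeF st s).
Proof. revert st; induction s as [|c s IH]; intros st; simpl; auto. Qed.

Lemma Zn_C_root st s z : InvS st -> In z (Zn st s) -> sC st z.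
Proof. intros H Hz. apply (node_sub st s); auto. apply Zn_in_C; auto. Qed.


Definition tOf (p : nat * nat) : list bool := epsilon (inhabits nil) (fun t => medE t = p).

Definition br (A0 B0 : list V) (root : St) (p : nat * nat) : list V :=
  if (Nat.eqb (fst p) 0 && Nat.eqb (snd p) 1)%bool then B0
  else if (Nat.eqb (fst p) 1 && Nat.eqb (snd p) 0)%bool then A0
  else Zn root (tOf p).

Definition valid (p : nat * nat) : Prop := p = (0,1) \/ p = (1,0) \/ exists s, p = medE s.
Definition detrel (p q : nat * nat) : Prop :=
  fst p * snd q = snd p * fst q + 1 \/ snd p * fst q = fst p * snd q + 1.

Lemma tOf_med s : tOf (medE s) = s.
Proof.
  unfold tOf. apply medE_inj. apply (epsilon_spec (inhabits nil) (fun t => medE t = medE s)).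
  exists s; auto.
Qed.

Lemma br_med A0 B0 root s : br A0 B0 root (medE s) = Zn root s.
Proof.
  unfold br. pose proof (medE_pos s) as [H1 H2].
  destruct (medE s) as [m1 m2] eqn:E. simpl in *.
  destruct (Nat.eqb m1 0) eqn:E1; [apply PeanoNat.Nat.eqb_eq in E1; lia|].
  destruct (Nat.eqb m2 0) eqn:E2; [apply PeanoNat.Nat.eqb_eq in E2; lia|].
  rewrite Bool.andb_false_r. simpl. rewrite <- E. rewrite tOf_med. auto.
Qed.

Lemma br_01 A0 B0 root : br A0 B0 root (0,1) = B0.
Proof. reflexivity. Qed.
Lemma br_10 A0 B0 root : br A0 B0 root (1,0) = A0.
Proof. reflexivity. Qed.

Lemma tree_ends A0 B0 root : sL root = B0 -> sR root = A0 -> forall s,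
  sL (nodeF root s) = br A0 B0 root (fst (endsF I0 s)) /\
  sR (nodeF root s) = br A0 B0 root (snd (endsF I0 s)).
Proof.
  intros HL HR s. induction s as [|b s IH] using rev_ind.
  - simpl. auto.
  - rewrite node_app, endsF_app. destruct IH as [IH1 IH2].
    assert (Hm : oZ (stepf (nodeF root s)) = br A0 B0 root (med (fst (endsF I0 s)) (snd (endsF I0 s)))).
    { fold (medE s). rewrite br_med. reflexivity. }
    destruct b; unfold child, childI; simpl; auto.
Qed.

Lemma valid_size p : valid p -> 1 <= fst p + snd p.
Proof.
  intros [->|[->|[s ->]]]; [simpl; lia|simpl; lia|]. pose proof (medE_pos s); lia.
Qed.

Lemma tree_adj1 A0 B0 root : InvS root -> sL root = B0 -> sR root = A0 ->
  forall s q, valid q -> detrel (medE s) q -> fst q + snd q < fst (medE s) + snd (medE s) ->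
  exists x y, In x (br A0 B0 root (medE s)) /\ In y (br A0 B0 root q) /\ adj x y.
Proof.
  intros HI HL HR s [r w] Hq Hd Hlt. simpl in Hlt.
  assert (Hm : medE s = (fst (medE s), snd (medE s))) by (destruct (medE s); reflexivity).
  destruct (endpoint_of s r w Hm Hd Hlt) as [E|E].
  - destruct (tree_ends A0 B0 root HL HR s) as [T1 _].
    pose proof (stepf_spec _ (node_inv root s HI)) as (_ & _ & _ & (z & a & Hz & Ha & Hza) & _).
    exists z, a. rewrite br_med. split; auto. split; auto. rewrite E, <- T1. auto.
  - destruct (tree_ends A0 B0 root HL HR s) as [_ T2].
    pose proof (stepf_spec _ (node_inv root s HI)) as (_ & _ & _ & _ & (z & a & Hz & Ha & Hza) & _).
    exists z, a. rewrite br_med. split; auto. split; auto. rewrite E, <- T2. auto.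
Qed.

Lemma tree_adj A0 B0 root : InvS root -> sL root = B0 -> sR root = A0 ->
  (exists x y, In x A0 /\ In y B0 /\ adj x y) ->
  forall p q, valid p -> valid q -> detrel p q ->
  exists x y, In x (br A0 B0 root p) /\ In y (br A0 B0 root q) /\ adj x y.
Proof.
  intros HI HL HR HAB p q Hp Hq Hd.
  pose proof (valid_size p Hp) as Sp. pose proof (valid_size q Hq) as Sq.
  destruct (PeanoNat.Nat.lt_total (fst q + snd q) (fst p + snd p)) as [Hlt|[Heq|Hgt]].
  - destruct Hp as [->|[->|[s ->]]]; try (simpl in Hlt; lia).
    apply tree_adj1; auto.
  - destruct p as [p1 p2], q as [q1 q2]. unfold detrel in Hd. simpl in Hd, Heq.
    destruct (same_size p1 p2 q1 q2) as [(-> & -> & -> & ->)|(-> & -> & -> & ->)]; auto.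
    destruct HAB as (x & y & Hx & Hy & Hxy). exists y, x. split; [exact Hy|split; [exact Hx|auto]].
  - destruct Hq as [->|[->|[s ->]]]; try (simpl in Hgt; lia).
    destruct (tree_adj1 A0 B0 root HI HL HR s p Hp) as (x & y & Hx & Hy & Hxy); auto.
    + unfold detrel in *. destruct p; simpl in *; lia.
    + exists y, x; auto.
Qed.

Lemma br_props A0 B0 root p : InvS root -> valid p -> A0 <> nil -> B0 <> nil ->
  conn_in A0 -> conn_in B0 ->
  br A0 B0 root p <> nil /\ conn_in (br A0 B0 root p).
Proof.
  intros HI Hp HA HB CA CB. destruct Hp as [->|[->|[s ->]]].
  - rewrite br_01; auto.
  - rewrite br_10; auto.
  - rewrite br_med. pose proof (stepf_spec _ (node_inv root s HI)) as (H1 & _ & H2 & _). auto.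
Qed.

Lemma br_disj A0 B0 root p q v : InvS root -> sL root = B0 -> sR root = A0 ->
  valid p -> valid q -> p <> q ->
  In v (br A0 B0 root p) -> In v (br A0 B0 root q) -> False.
Proof.
  intros HI HL HR Hp Hq Hne Hvp Hvq.
  pose proof HI as (HAW & HBW & HAB & (_ & HC1 & _) & _).
  rewrite HL, HR in *.
  assert (HZ : forall s, In v (Zn root s) -> In v A0 \/ In v B0 -> False).
  { intros s Hs [H|H]; apply (HC1 v); [apply (Zn_C_root root s v)| |apply (Zn_C_root root s v)|]; auto. }
  destruct Hp as [->|[->|[s ->]]]; destruct Hq as [->|[->|[t ->]]];
    rewrite ?br_01, ?br_10, ?br_med in *; try congruence.
  - apply (HAB v); auto.
  - apply (HZ t); auto.
  - apply (HAB v); auto.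
  - apply (HZ t); auto.
  - apply (HZ s); auto.
  - apply (HZ s); auto.
  - apply (Zn_disj root s t v); auto. intros E; subst; auto.
Qed.

End Graph.

From mathcomp Require Import all_boot all_algebra zify.
Import GRing.Theory Num.Theory.

Lemma medE_exists n : forall p q, (p + q <= n)%N -> (0 < p)%N -> (0 < q)%N -> coprime p q ->
  exists s, medE s = (p, q).
Proof.
  induction n as [|n IH]; intros p q Hn Hp Hq Hc.
  - lia.
  - case: (ltngtP p q) => Hpq.
    + have Hc' : coprime p (q - p).
      { move: Hc; by rewrite /coprime -{1}(subnKC (ltnW Hpq)) gcdnDl. }
      have [s Hs] : exists s, medE s = (p, q - p)%N.
      { apply: IH => //; lia. }
      exists (true :: s). rewrite medE_cons Hs /Sm /=. f_equal. lia.
    + have Hc' : coprime (p - q) q.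
      { move: Hc; rewrite coprime_sym /coprime -{1}(subnKC (ltnW Hpq)) gcdnDl => H.
        by rewrite gcdnC. }
      have [s Hs] : exists s, medE s = (p - q, q)%N.
      { apply: IH => //; lia. }
      exists (false :: s). rewrite medE_cons Hs /Sm /=. f_equal. lia.
    + subst q. move: Hc; rewrite /coprime gcdnn => /eqP Hp1. subst p.
      exists nil. reflexivity.
Qed.

Local Open Scope ring_scope.

Definition pr (h : option rat) : nat * nat :=
  match h with None => (1%N, 0%N) | Some u => (`|numq u|%N, `|denq u|%N) end.
Definition isneg (h : option rat) : bool := match h with Some u => (u < 0)%R | None => false end.
Definition ispos (h : option rat) : bool := match h with Some u => (0 < u)%R | None => false end.

Lemma pr_den h : farey_den h = ((pr h).2)%:Z.
Proof.
  case: h => [u|] //=. by rewrite gtz0_abs ?denq_gt0.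
Qed.

Lemma pr_num h : farey_num h = if isneg h then (- ((pr h).1)%:Z)%R else ((pr h).1)%:Z.
Proof.
  case: h => [u|] //=. case: ifP => Hu.
  - rewrite -numq_lt0 in Hu. rewrite ltz0_abs //. by rewrite opprK.
  - rewrite gez0_abs //. rewrite numq_ge0. by case: ltrgt0P Hu.
Qed.

Lemma pr_pos h : ispos h || isneg h -> (0 < (pr h).1)%N /\ (0 < (pr h).2)%N.
Proof.
  case: h => [u|] //= Hu. split.
  - rewrite absz_gt0 numq_eq0. case: ltrgt0P Hu => //.
  - by rewrite absz_gt0 denq_neq0.
Qed.

Lemma pr_zero h : ~~ ispos h -> ~~ isneg h -> pr h = (0%N, 1%N) \/ pr h = (1%N, 0%N).
Proof.
  case: h => [u|] /=; last by right.
  case: ltrgt0P => // -> _ _. left. reflexivity.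
Qed.

Lemma pr_valid h : valid (pr h).
Proof.
  case Hp: (ispos h || isneg h).
  - right; right. have [H1 H2] := pr_pos h Hp.
    case: h Hp H1 H2 => [u|] //= Hp H1 H2.
    have [s Hs] := medE_exists (`|numq u| + `|denq u|)%N _ _ (leqnn _) H1 H2 (coprime_num_den u).
    by exists s; rewrite Hs.
  - move/negbT: Hp; rewrite negb_or => /andP [H1 H2].
    case: (pr_zero h H1 H2) => ->; [left|right; left]; reflexivity.
Qed.

Lemma pr_med h : ispos h || isneg h -> exists s, pr h = medE s.
Proof.
  move=> Hp. have [H1 H2] := pr_pos h Hp.
  case: (pr_valid h) => [E|[E|//]]; rewrite E /= in H1 H2; lia.
Qed.

Lemma pr_cases h :
  (ispos h = true /\ isneg h = false /\ (0 < (pr h).1)%N /\ (0 < (pr h).2)%N) \/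
  (ispos h = false /\ isneg h = true /\ (0 < (pr h).1)%N /\ (0 < (pr h).2)%N) \/
  (ispos h = false /\ isneg h = false /\ (pr h = (0%N, 1%N) \/ pr h = (1%N, 0%N))).
Proof.
  case Hp: (ispos h); case Hn: (isneg h).
  - exfalso. case: h Hp Hn => [u|] //= Hp Hn. by case: ltrgt0P Hp Hn.
  - left. have := pr_pos h. rewrite Hp /= => /(_ isT) [? ?]. done.
  - right; left. have := pr_pos h. rewrite Hn orbT => /(_ isT) [? ?]. done.
  - right; right. split => //. split => //. apply: pr_zero; by rewrite ?Hp ?Hn.
Qed.

Lemma fa_det h h' : farey_adj h h' ->
  (isneg h -> ~~ ispos h') /\ (ispos h -> ~~ isneg h') /\ detrel (pr h) (pr h').
Proof.
  rewrite /farey_adj !pr_num !pr_den /detrel.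
  have := pr_cases h; have := pr_cases h'.
  destruct (pr h) as [p q], (pr h') as [r s]; simpl.
  move=> [[-> [-> [H3 H4]]]|[[-> [-> [H3 H4]]]|[-> [-> [[-> ->]|[-> ->]]]]]];
  move=> [[-> [-> [H1 H2]]]|[[-> [-> [H1 H2]]]|[-> [-> [[-> ->]|[-> ->]]]]]];
  simpl; intros H; (repeat split; try done); nia.
Qed.

Lemma pr_inj h h' : h <> h' -> isneg h = isneg h' -> pr h <> pr h'.
Proof.
  move=> Hne Hs E. apply: Hne.
  have Hn : farey_num h = farey_num h' by rewrite !pr_num Hs E.
  have Hd : farey_den h = farey_den h' by rewrite !pr_den E.
  move: Hn Hd; clear. case: h h' => [u|] [v|] //= Hn Hd.
  - by rewrite -[u]divq_num_den -[v]divq_num_den Hn Hd.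
  - by move: (denq_gt0 u); rewrite Hd.
  - by move: (denq_gt0 v); rewrite -Hd.
Qed.

Theorem theorem2 (V : Type) (adj : V -> V -> Prop) :
  simple_graph adj -> Pi_graph adj -> tight_minor farey_adj adj.
Proof.
  move=> [Hsym Hirr] [[Hex Hiec] Hpi].
  have [A0 [B0 [W0 [Cp [Cm [Ip [Im [Hdisj [HA0 [HB0 [CA0 [CB0 HAB]]]]]]]]]]]] :=
    init_config V adj Hsym Hirr Hiec Hpi Hex.
  pose rP := mkSt V W0 B0 A0 Cp. pose rN := mkSt V W0 B0 A0 Cm.
  have IP : InvS V adj rP := Ip. have IN : InvS V adj rN := Im.
  pose brP := br V adj Hsym Hiec Hpi A0 B0 rP.
  pose brN := br V adj Hsym Hiec Hpi A0 B0 rN.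
  pose Bm := fun h => if isneg h then brN (pr h) else brP (pr h).
  have Hzero : forall p, p = (0%N, 1%N) \/ p = (1%N, 0%N) -> brP p = brN p.
  { by move=> p [->|->]. }
  have Hprops : forall h, Bm h <> nil /\ conn_in V adj (Bm h).
  { move=> h. rewrite /Bm. case: (isneg h); apply: br_props => //; apply: pr_valid. }
  have Hmedne : forall s, medE s <> (0%N, 1%N) /\ medE s <> (1%N, 0%N).
  { move=> s. have [H1 H2] := medE_pos s. destruct (medE s) as [a b]. simpl in *.
    split => E; case: E => Ea Eb; lia. }
  exists (fun h x => List.In x (Bm h)). split; last first.
  { move=> h. exists (Bm h) => x Hx. exact Hx. }
  split; [|split; [|split]].
  - move=> h. have [Hne _] := Hprops h. destruct (Bm h) as [|x l] => //. exists x. by left.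
  - move=> h h' x Hne Hx Hx'. rewrite /Bm in Hx Hx'.
    case Eh: (isneg h) in Hx; case Eh': (isneg h') in Hx'.
    + apply: (br_disj V adj Hsym Hiec Hpi A0 B0 rN (pr h) (pr h') x IN) => //;
        try apply: pr_valid. apply: pr_inj => //. by rewrite Eh Eh'.
    + have [s Es] := pr_med h (introT orP (or_intror Eh)).
      case Ep': (ispos h').
      * have [t Et] := pr_med h' (introT orP (or_introl Ep')).
        rewrite Es /brN br_med in Hx. rewrite Et /brP br_med in Hx'.
        apply: (Hdisj x).
        -- exact: (Zn_C_root V adj Hsym Hiec Hpi rP t x IP Hx').
        -- exact: (Zn_C_root V adj Hsym Hiec Hpi rN s x IN Hx).
      * have Hz := pr_zero h' (negbT Ep') (negbT Eh'). rewrite Hzero // in Hx'.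
        apply: (br_disj V adj Hsym Hiec Hpi A0 B0 rN (pr h) (pr h') x IN) => //;
          try apply: pr_valid.
        rewrite Es. have [N1 N2] := Hmedne s. case: Hz => ->; auto.
    + have [s Es] := pr_med h' (introT orP (or_intror Eh')).
      case Ep: (ispos h).
      * have [t Et] := pr_med h (introT orP (or_introl Ep)).
        rewrite Es /brN br_med in Hx'. rewrite Et /brP br_med in Hx.
        apply: (Hdisj x).
        -- exact: (Zn_C_root V adj Hsym Hiec Hpi rP t x IP Hx).
        -- exact: (Zn_C_root V adj Hsym Hiec Hpi rN s x IN Hx').
      * have Hz := pr_zero h (negbT Ep) (negbT Eh). rewrite Hzero // in Hx.
        apply: (br_disj V adj Hsym Hiec Hpi A0 B0 rN (pr h) (pr h') x IN) => //;
          try apply: pr_valid.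
        rewrite Es. have [N1 N2] := Hmedne s. case: Hz => ->; auto.
    + apply: (br_disj V adj Hsym Hiec Hpi A0 B0 rP (pr h) (pr h') x IP) => //;
        try apply: pr_valid. apply: pr_inj => //. by rewrite Eh Eh'.
  - move=> h x y Hx Hy. have [_ Hc] := Hprops h. exact: (Hc x y Hx Hy).
  - move=> h h' Hf. have [N1 [N2 Hd]] := fa_det h h' Hf. rewrite /Bm.
    case Eh: (isneg h); case Eh': (isneg h').
    + exact: (tree_adj V adj Hsym Hiec Hpi A0 B0 rN IN erefl erefl HAB _ _ (pr_valid h) (pr_valid h') Hd).
    + have Ep' : ~~ ispos h' by apply: N1.
      rewrite Hzero; last by apply: pr_zero => //; rewrite Eh'.
      exact: (tree_adj V adj Hsym Hiec Hpi A0 B0 rN IN erefl erefl HAB _ _ (pr_valid h) (pr_valid h') Hd).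
    + have Ep : ~~ ispos h by apply/negP => /N2; rewrite Eh'.
      rewrite Hzero; last by apply: pr_zero => //; rewrite Eh.
      exact: (tree_adj V adj Hsym Hiec Hpi A0 B0 rN IN erefl erefl HAB _ _ (pr_valid h) (pr_valid h') Hd).
    + exact: (tree_adj V adj Hsym Hiec Hpi A0 B0 rP IP erefl erefl HAB _ _ (pr_valid h) (pr_valid h') Hd).
Qed.
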